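(* Let $f$ be a non-degenerate $C^2$ function on $\mathbb R$ and let $F$ be a $C^1$ function on $\mathbb R$ with $\lim_{x\to-\infty}F(x)=-1$ and $\lim_{x\to+\infty}F(x)=1$. Let $a<b$ with $f(a)f(b)\neq0$. Then $$\mathcal H^0(\{f=0\}\cap[a,b])=\frac12\Big[F\Big(\frac{f'}{f}(b)\Big)-F\Big(\frac{f'}{f}(a)\Big)-\int_a^bF'\Big(\frac{f'(x)}{f(x)}\Big)\Big(\frac{f'(x)}{f(x)}\Big)'dx\Big].$$ In particular, if $a$ and $b$ are points of local extrema of $f$ (so $f'(a)=f'(b)=0$), then $$\mathcal H^0(\{f=0\}\cap[a,b])=-\frac12\int_a^bF'\Big(\frac{f'(x)}{f(x)}\Big)\Big(\frac{f'(x)}{f(x)}\Big)'dx.$$ Here the integrand is defined where $f(x)\neq0$ and the integral is the sum of the (improper) integrals over the finitely many open intervals of $[a,b]$ between consecutive zeros of $f$.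
   Context: $\mathcal H^0(\{f=0\}\cap[a,b])$ is the number of zeros of $f$ in $[a,b]$. A $C^1$ function $f$ on $\mathbb R$ is non-degenerate if there is no $x$ with $f(x)=f'(x)=0$ (equivalently $\sqrt{f^2+f'^2}$ has positive minimum on every compact set). *)

(* Defs.v *)
From Stdlib Require Import Reals List Sorted.
From Coquelicot Require Import Coquelicot.
Open Scope R_scope.

Definition is_C2 (f : R -> R) : Prop :=
  forall x, ex_derive f x /\ ex_derive (Derive f) x /\
            continuous (Derive (Derive f)) x.

Definition is_C1 (F : R -> R) : Prop :=
  forall x, ex_derive F x /\ continuous (Derive F) x.

Definition nondegenerate (f : R -> R) : Prop :=
  forall x, ~ (f x = 0 /\ Derive f x = 0).

Definition logder (f : R -> R) (x : R) : R := Derive f x / f x.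

Definition integrand (F f : R -> R) (x : R) : R :=
  Derive F (logder f x) * Derive (logder f) x.

Fixpoint is_pw_int (h : R -> R) (pts : list R) (v : R) : Prop :=
  match pts with
  | c :: ((d :: _) as rest) =>
      exists v1 v2, is_RInt_gen h (at_right c) (at_left d) v1 /\
                    is_pw_int h rest v2 /\ v = v1 + v2
  | _ => v = 0
  end.

(* Main.v *)
Require Import Defs.
From Stdlib Require Import Reals List Sorted Classical Lra Lia.
From Coquelicot Require Import Coquelicot.
Open Scope R_scope.

Lemma ball_R (c e y : R) : ball c e y <-> Rabs (y - c) < e.
Proof. unfold ball; simpl; unfold AbsRing_ball, abs, minus, plus, opp; simpl. tauto. Qed.
Lemma locally_R (c:R) (Q:R->Prop) : locally c Q <-> exists e, 0<e /\ forall y, Rabs (y - c) < e -> Q y.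
Proof. split.
- intros [e He]. exists e; split. apply cond_pos. intros y Hy; apply He, ball_R, Hy.
- intros [e [He H]]. exists (mkposreal e He). intros y Hy; apply H, ball_R, Hy.
Qed.

Lemma cont_eps (g : R -> R) x : continuity_pt g x -> forall eps, 0 < eps ->
  exists d, 0 < d /\ forall y, Rabs (y - x) < d -> Rabs (g y - g x) < eps.
Proof.
  intros H eps He. destruct (H eps He) as [d [Hd H']]. exists d; split; auto.
  intros y Hy. destruct (Req_dec y x) as [->|Hne].
  - unfold Rminus; rewrite Rplus_opp_r, Rabs_R0; auto.
  - apply (H' y). split. split. exact I. auto. exact Hy.
Qed.

Lemma C2_cont f x : is_C2 f ->
  continuity_pt f x /\ continuity_pt (Derive f) x /\ continuity_pt (Derive (Derive f)) x.
Proof.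
  intros H. destruct (H x) as [H1 [H2 H3]].
  split; [|split]; apply continuity_pt_filterlim.
  - apply (ex_derive_continuous f x H1).
  - apply (ex_derive_continuous _ x H2).
  - apply H3.
Qed.

Lemma nz_near f x : is_C2 f -> f x <> 0 ->
  exists e, 0 < e /\ forall y, Rabs (y - x) < e -> f y <> 0.
Proof.
  intros H Hx. destruct (C2_cont f x H) as [Hc _].
  destruct (cont_eps f x Hc (Rabs (f x)) (Rabs_pos_lt _ Hx)) as [d [Hd H']].
  exists d; split; auto. intros y Hy E. specialize (H' y Hy). rewrite E in H'.
  rewrite Rminus_0_l, Rabs_Ropp in H'. lra.
Qed.

Definition D2f (f : R -> R) y :=
  (Derive (Derive f) y * f y - Derive f y * Derive f y) / (f y * f y).

Lemma Dlogder f y : is_C2 f -> f y <> 0 -> Derive (logder f) y = D2f f y.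
Proof.
  intros H Hy. destruct (H y) as [H1 [H2 _]]. unfold logder.
  rewrite Derive_div; auto. unfold D2f. simpl. field. auto.
Qed.

Lemma ex_logder f y : is_C2 f -> f y <> 0 -> ex_derive (logder f) y.
Proof.
  intros H Hy. destruct (H y) as [H1 [H2 _]]. unfold logder.
  apply ex_derive_div; auto.
Qed.

Lemma cont_logder f y : is_C2 f -> f y <> 0 -> continuity_pt (logder f) y.
Proof.
  intros H Hy. apply continuity_pt_filterlim. apply (ex_derive_continuous (logder f) y). apply ex_logder; auto.
Qed.

Lemma cont_Dlogder f t : is_C2 f -> f t <> 0 -> continuity_pt (Derive (logder f)) t.
Proof.
  intros H Ht. apply continuity_pt_filterlim.
  apply (continuous_ext_loc _ (D2f f)).
  - destruct (nz_near f t H Ht) as [e [He He']]. apply locally_R. exists e; split; auto.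
    intros y Hy. symmetry; apply Dlogder; auto.
  - apply continuity_pt_filterlim. destruct (C2_cont f t H) as [C1 [C2 C3]].
    unfold D2f. apply continuity_pt_div.
    + apply continuity_pt_minus; apply continuity_pt_mult; auto.
    + apply continuity_pt_mult; auto.
    + intro E. apply Rmult_integral in E. tauto.
Qed.

Lemma cont_integrand F f t : is_C2 f -> is_C1 F -> f t <> 0 -> continuity_pt (integrand F f) t.
Proof.
  intros H HF Ht. unfold integrand. apply continuity_pt_mult.
  - apply (continuity_pt_comp (logder f) (Derive F)).
    + apply cont_logder; auto.
    + apply continuity_pt_filterlim, (proj2 (HF _)).
  - apply cont_Dlogder; auto.
Qed.

Lemma derive_G F f t : is_C2 f -> is_C1 F -> f t <> 0 ->
  is_derive (fun x => F (logder f x)) t (integrand F f t).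
Proof.
  intros H HF Ht.
  assert (K := is_derive_comp F (logder f) t _ _
     (Derive_correct F _ (proj1 (HF _))) (Derive_correct _ _ (ex_logder f t H Ht))).
  unfold integrand. replace (Derive F (logder f t) * Derive (logder f) t)
    with (scal (Derive (logder f) t) (Derive F (logder f t))). exact K.
  unfold scal; simpl; unfold mult; simpl. ring.
Qed.

Lemma cont_DG F f t : is_C2 f -> is_C1 F -> f t <> 0 ->
  continuous (Derive (fun x => F (logder f x))) t.
Proof.
  intros H HF Ht. apply (continuous_ext_loc _ (integrand F f)).
  - destruct (nz_near f t H Ht) as [e [He He']]. apply locally_R. exists e; split; auto.
    intros y Hy. symmetry; apply is_derive_unique, derive_G; auto.
  - apply continuity_pt_filterlim, cont_integrand; auto.
Qed.

Lemma minmax_in x y a b t : x < a < y -> x < b < y -> Rmin a b <= t <= Rmax a b -> x < t < y.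
Proof. unfold Rmin, Rmax; destruct Rle_dec; lra. Qed.

Lemma int_piece F f x y A B : is_C2 f -> is_C1 F -> x < y ->
  (forall t, x < t < y -> f t <> 0) ->
  filterlim (fun t => F (logder f t)) (at_right x) (locally A) ->
  filterlim (fun t => F (logder f t)) (at_left y) (locally B) ->
  is_RInt_gen (integrand F f) (at_right x) (at_left y) (B - A).
Proof.
  intros H HF Hxy Hnz HA HB.
  assert (Hev : filter_prod (at_right x) (at_left y)
     (fun ab => x < fst ab < y /\ x < snd ab < y)).
  { apply (Filter_prod _ _ _ (fun u => x < u < y) (fun u => x < u < y)).
    - apply locally_R. exists (y - x); split; [lra|]. intros u Hu Hu'.
      apply Rabs_def2 in Hu. lra.
    - apply locally_R. exists (y - x); split; [lra|]. intros u Hu Hu'.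
      apply Rabs_def2 in Hu. lra.
    - intros u v Hu Hv; simpl; auto. }
  apply (is_RInt_gen_ext (Derive (fun t => F (logder f t)))).
  { eapply filter_imp; [| exact Hev]; intros [u v] [Hu Hv] t Ht; simpl in *.
    apply is_derive_unique, derive_G; auto. apply Hnz.
    apply (minmax_in x y u v t); auto; lra. }
  apply is_RInt_gen_Derive; auto.
  - eapply filter_imp; [| exact Hev]; intros [u v] [Hu Hv] t Ht; simpl in *.
    eexists. apply derive_G; auto. apply Hnz, (minmax_in x y u v t); auto.
  - eapply filter_imp; [| exact Hev]; intros [u v] [Hu Hv] t Ht; simpl in *.
    apply cont_DG; auto. apply Hnz, (minmax_in x y u v t); auto.
Qed.

Lemma ratio_third p q l : l <> 0 -> Rabs (p - l) < Rabs l / 2 -> Rabs (q - l) < Rabs l / 2 ->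
  q <> 0 /\ 1/3 < p / q.
Proof.
  intros Hl Hp Hq. apply Rabs_def2 in Hp. apply Rabs_def2 in Hq.
  destruct (Rlt_or_le 0 l) as [Hl0|Hl0].
  - rewrite Rabs_pos_eq in Hp, Hq by lra. assert (q > 0) by lra. split; [lra|].
    assert (E : p / q = 1/3 + (3*p - q)*q/(3*(q*q))) by (field; lra). rewrite E.
    assert (0 < (3*p - q)*q/(3*(q*q))); [|lra].
    apply Rdiv_lt_0_compat; nra.
  - rewrite Rabs_left in Hp, Hq by lra. assert (q < 0) by lra. split; [lra|].
    assert (E : p / q = 1/3 + (3*p - q)*q/(3*(q*q))) by (field; lra). rewrite E.
    assert (0 < (3*p - q)*q/(3*(q*q))); [|lra].
    apply Rdiv_lt_0_compat; nra.
Qed.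

Lemma logder_zero f z : is_C2 f -> nondegenerate f -> f z = 0 ->
  exists d, 0 < d /\ forall h, h <> 0 -> Rabs h < d -> 1/3 < logder f (z + h) * h.
Proof.
  intros H Hnd Hz. set (l := Derive f z).
  assert (Hl : l <> 0) by (intro E; apply (Hnd z); auto).
  assert (Hl2 : 0 < Rabs l / 2) by (generalize (Rabs_pos_lt _ Hl); lra).
  destruct (H z) as [Hd _].
  assert (Hd' := proj1 (is_derive_Reals f z l) (Derive_correct f z Hd)).
  destruct (Hd' _ Hl2) as [d1 Hd1].
  destruct (C2_cont f z H) as [_ [Hc _]].
  destruct (cont_eps _ z Hc _ Hl2) as [d2 [Hd2 Hc2]].
  exists (Rmin d1 d2); split. apply Rmin_pos; [apply cond_pos|auto].
  intros h Hh Hhd.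
  assert (A1 := Hd1 h Hh (Rlt_le_trans _ _ _ Hhd (Rmin_l _ _))).
  assert (A2 : Rabs (Derive f (z + h) - l) < Rabs l / 2).
  { apply Hc2. replace (z + h - z) with h by ring. eapply Rlt_le_trans; [exact Hhd| apply Rmin_r]. }
  rewrite Hz, Rminus_0_r in A1.
  destruct (ratio_third _ _ _ Hl A2 A1) as [Hq Hr].
  unfold logder. replace (Derive f (z + h) / f (z + h) * h) with (Derive f (z + h) / (f (z + h) / h)).
  exact Hr. field. split; auto. intro E; apply Hq; rewrite E; unfold Rdiv; ring.
Qed.

Lemma logder_right f z : is_C2 f -> nondegenerate f -> f z = 0 ->
  filterlim (logder f) (at_right z) (Rbar_locally p_infty).
Proof.
  intros H Hnd Hz P [M HM]. destruct (logder_zero f z H Hnd Hz) as [d [Hd Hl]].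
  set (K := Rmax M 1). assert (HK : 1 <= K) by apply Rmax_r.
  assert (HMK : M <= K) by apply Rmax_l.
  apply locally_R. exists (Rmin d (1/(3*K))). split.
  { apply Rmin_pos; auto. apply Rdiv_lt_0_compat; lra. }
  intros y Hy Hzy. apply HM.
  set (h := y - z). assert (Hh : 0 < h) by (unfold h; lra).
  replace y with (z + h) by (unfold h; ring).
  assert (h < d) by (apply Rabs_def2 in Hy; generalize (Rmin_l d (1/(3*K))); unfold h; lra).
  assert (h < 1/(3*K)) by (apply Rabs_def2 in Hy; generalize (Rmin_r d (1/(3*K))); unfold h; lra).
  assert (E : 3*K*h < 1).
  { apply (Rmult_lt_compat_l (3*K)) in H1; [|lra]. field_simplify in H1; lra. }
  assert (L1 := Hl h ltac:(lra) ltac:(rewrite Rabs_pos_eq; lra)).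
  set (L := logder f (z + h)) in *. nra.
Qed.

Lemma logder_left f z : is_C2 f -> nondegenerate f -> f z = 0 ->
  filterlim (logder f) (at_left z) (Rbar_locally m_infty).
Proof.
  intros H Hnd Hz P [M HM]. destruct (logder_zero f z H Hnd Hz) as [d [Hd Hl]].
  set (K := Rmax (-M) 1). assert (HK : 1 <= K) by apply Rmax_r.
  assert (HMK : -M <= K) by apply Rmax_l.
  apply locally_R. exists (Rmin d (1/(3*K))). split.
  { apply Rmin_pos; auto. apply Rdiv_lt_0_compat; lra. }
  intros y Hy Hzy. apply HM.
  set (h := z - y). assert (Hh : 0 < h) by (unfold h; lra).
  replace y with (z + - h) by (unfold h; ring).
  assert (h < d) by (apply Rabs_def2 in Hy; generalize (Rmin_l d (1/(3*K))); unfold h; lra).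
  assert (h < 1/(3*K)) by (apply Rabs_def2 in Hy; generalize (Rmin_r d (1/(3*K))); unfold h; lra).
  assert (E : 3*K*h < 1).
  { apply (Rmult_lt_compat_l (3*K)) in H1; [|lra]. field_simplify in H1; lra. }
  assert (L1 := Hl (-h) ltac:(lra) ltac:(rewrite Rabs_Ropp, Rabs_pos_eq; lra)).
  set (L := logder f (z + - h)) in *. nra.
Qed.

Lemma G_zero F f z : is_C2 f -> nondegenerate f -> f z = 0 ->
  is_lim F m_infty (Finite (-1)) -> is_lim F p_infty (Finite 1) ->
  filterlim (fun t => F (logder f t)) (at_right z) (locally 1) /\
  filterlim (fun t => F (logder f t)) (at_left z) (locally (-1)).
Proof.
  intros H Hnd Hz Hm Hp. split.
  - eapply filterlim_comp. apply logder_right; auto. exact Hp.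
  - eapply filterlim_comp. apply logder_left; auto. exact Hm.
Qed.

Lemma G_nz F f c : is_C2 f -> is_C1 F -> f c <> 0 ->
  filterlim (fun t => F (logder f t)) (at_right c) (locally (F (logder f c))) /\
  filterlim (fun t => F (logder f t)) (at_left c) (locally (F (logder f c))).
Proof.
  intros H HF Hc.
  assert (K : continuous (fun t => F (logder f t)) c).
  { apply continuous_comp. apply continuity_pt_filterlim, cont_logder; auto.
    apply (ex_derive_continuous F), (proj1 (HF _)). }
  split; intros P HP; specialize (K P HP); unfold filtermap in *; unfold at_right, at_left, within; (eapply filter_imp; [|exact K]); intros; auto.
Qed.

Lemma isolated f s : is_C2 f -> nondegenerate f ->
  exists e, 0 < e /\ forall x, Rabs (x - s) < e -> x <> s -> f x <> 0.
Proof.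
  intros H Hnd. destruct (Req_dec (f s) 0) as [Hz|Hz].
  - destruct (logder_zero f s H Hnd Hz) as [d [Hd Hl]]. exists d; split; auto.
    intros x Hx Hne E. assert (K := Hl (x - s) ltac:(lra) Hx).
    replace (s + (x - s)) with x in K by ring. unfold logder in K. rewrite E in K.
    unfold Rdiv in K. rewrite Rinv_0 in K. lra.
  - destruct (nz_near f s H Hz) as [e [He He']]. exists e; split; auto.
Qed.

Lemma sorted_snoc l s : Sorted Rlt l -> (forall x, In x l -> x < s) -> Sorted Rlt (l ++ s :: nil).
Proof.
  induction l as [|x l IH]; intros Hs Hl; simpl.
  - constructor; auto.
  - inversion Hs; subst. constructor. apply IH; auto. intros y Hy; apply Hl; right; auto.
    destruct l as [|y l]; simpl. constructor. apply Hl; left; auto.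
    inversion H2; subst. constructor; auto.
Qed.

Lemma sorted_cons_lt c l : Sorted Rlt l -> (forall x, In x l -> c < x) -> Sorted Rlt (c :: l).
Proof.
  intros Hs Hl. constructor; auto. destruct l; constructor. apply Hl; left; auto.
Qed.

Definition Pz (f : R -> R) a t := exists z, Sorted Rlt z /\ forall x, In x z <-> (a <= x <= t /\ f x = 0).

Lemma zeros_list f a b : is_C2 f -> nondegenerate f -> f a <> 0 -> a <= b -> Pz f a b.
Proof.
  intros H Hnd Ha Hab.
  set (E := fun t => a <= t <= b /\ Pz f a t).
  assert (Ea : E a).
  { split; [lra|]. exists nil; split. constructor. intros x; split; simpl; [tauto|].
    intros [Hx Hf]. assert (x = a) by lra. subst; tauto. }
  destruct (completeness E) as [s [Hub Hlub]].
  { exists b. intros x [Hx _]; lra. }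
  { exists a; auto. }
  assert (Has : a <= s) by (apply Hub; auto).
  assert (Hsb : s <= b) by (apply Hlub; intros x [Hx _]; lra).
  destruct (isolated f s H Hnd) as [e [He Hiso]].
  assert (Ht : exists t, E t /\ s - e < t).
  { apply NNPP; intro N. assert (s <= s - e); [|lra]. apply Hlub. intros x Hx.
    destruct (Rle_dec x (s - e)) as [|n]; auto. exfalso; apply N; exists x; split; auto; lra. }
  destruct Ht as [t [[Ht1 [z [Hzs Hzc]]] Hte]].
  assert (Hts : t <= s) by (apply Hub; split; auto; exists z; auto).
  set (u := Rmin b (s + e/2)).
  assert (Hu1 : s <= u) by (unfold u; apply Rmin_glb; lra).
  assert (Hu2 : u <= b) by apply Rmin_l.
  assert (Hu3 : u <= s + e/2) by apply Rmin_r.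
  assert (Pu : Pz f a u).
  { assert (Key : forall x, a <= x <= u -> f x = 0 -> ~ x <= t -> x = s /\ t < s /\ f s = 0).
    { intros x Hx Hf Hnt. destruct (Req_dec x s) as [->|Hne]. split; auto; split; auto; lra.
      exfalso. apply (Hiso x); auto. apply Rabs_def1; lra. }
    destruct (classic (t < s /\ f s = 0)) as [Hc|Hc].
    - exists (z ++ s :: nil). split.
      + apply sorted_snoc; auto. intros x Hx. apply Hzc in Hx. lra.
      + intros x. rewrite in_app_iff. simpl. split.
        * intros [Hx|[Hx|[]]]. apply Hzc in Hx; split; [lra|tauto]. subst; split; [lra|tauto].
        * intros [Hx Hf]. destruct (Rle_dec x t) as [Hle|Hnt]. left; apply Hzc; split; auto; lra.
          right; left. symmetry; apply (Key x); auto.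
    - exists z; split; auto. intros x; split.
      + intros Hx. apply Hzc in Hx. split; [lra|tauto].
      + intros [Hx Hf]. destruct (Rle_dec x t) as [Hle|Hnt]. apply Hzc; split; auto; lra.
        exfalso; apply Hc, (Key x); auto. }
  assert (Hus : u <= s) by (apply Hub; split; auto; lra).
  unfold u in *. destruct (Rle_dec b (s + e/2)).
  - rewrite Rmin_left in Pu by lra. exact Pu.
  - rewrite Rmin_right in Hus by lra. lra.
Qed.

Fixpoint chainP (Q : R -> R -> Prop) (l : list R) : Prop :=
  match l with
  | x :: ((y :: _) as r) => Q x y /\ chainP Q r
  | _ => True
  end.

Lemma pw_gen h (Lv Rv : R -> R) : forall l c d,
  chainP (fun x y => is_RInt_gen h (at_right x) (at_left y) (Lv y - Rv x)) (c :: l ++ d :: nil) ->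
  is_pw_int h (c :: l ++ d :: nil) (Lv d - Rv c - fold_right (fun p s => Rv p - Lv p + s) 0 l).
Proof.
  induction l as [|p l IH]; intros c d Hc; simpl in *.
  - exists (Lv d - Rv c), 0. split. tauto. split. auto. ring.
  - destruct Hc as [H1 H2]. exists (Lv p - Rv c), (Lv d - Rv p - fold_right (fun p s => Rv p - Lv p + s) 0 l).
    split; auto. split. apply (IH p d H2). ring.
Qed.

Definition Rv F f x := if Req_EM_T (f x) 0 then 1 else F (logder f x).
Definition Lv F f x := if Req_EM_T (f x) 0 then -1 else F (logder f x).

Lemma chain_ok F f b : is_C2 f -> is_C1 F -> nondegenerate f ->
  is_lim F m_infty (Finite (-1)) -> is_lim F p_infty (Finite 1) ->
  forall l c, StronglySorted Rlt (c :: l ++ b :: nil) ->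
  (forall x, c < x < b -> f x = 0 -> In x l) ->
  chainP (fun x y => is_RInt_gen (integrand F f) (at_right x) (at_left y) (Lv F f y - Rv F f x))
    (c :: l ++ b :: nil).
Proof.
  intros H HF Hnd Hm Hp.
  assert (Piece : forall x y, x < y -> (forall t, x < t < y -> f t <> 0) ->
     is_RInt_gen (integrand F f) (at_right x) (at_left y) (Lv F f y - Rv F f x)).
  { intros x y Hxy Hnz. apply int_piece; auto.
    - unfold Rv. destruct (Req_EM_T (f x) 0). apply (G_zero F f x); auto. apply (G_nz F f x); auto.
    - unfold Lv. destruct (Req_EM_T (f y) 0). apply (G_zero F f y); auto. apply (G_nz F f y); auto. }
  induction l as [|p l IH]; intros c Hs Hz.
  - apply StronglySorted_inv in Hs as [_ Hs2]. simpl. split; auto.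
    rewrite Forall_forall in Hs2. apply Piece. apply Hs2; left; auto.
    intros t Ht E. apply (Hz t Ht E).
  - apply StronglySorted_inv in Hs as [Hs1 Hs2].
    assert (Hs1' := Hs1). apply StronglySorted_inv in Hs1' as [_ Hs3].
    rewrite Forall_forall in Hs2, Hs3.
    assert (Hcp : c < p) by (apply Hs2; left; auto).
    assert (Hpb : p < b) by (apply Hs3, in_or_app; right; left; auto).
    simpl. split.
    + apply Piece; auto. intros t Ht E. destruct (Hz t ltac:(lra) E) as [->|Hin]. lra.
      assert (p < t) by (apply Hs3, in_or_app; left; auto). lra.
    + assert (Z : forall x, p < x < b -> f x = 0 -> In x l).
      { intros x Hx E. destruct (Hz x ltac:(lra) E) as [->|Hin]. lra. auto. }
      exact (IH p Hs1 Z).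
Qed.

Lemma sum_zeros F f z : (forall x, In x z -> f x = 0) ->
  fold_right (fun p s => Rv F f p - Lv F f p + s) 0 z = 2 * INR (length z).
Proof.
  induction z as [|p z IH]; intros Hz. simpl; ring. cbn [fold_right]. change (length (p :: z)) with (S (length z)).
  rewrite IH by (intros; apply Hz; right; auto). rewrite S_INR.
  unfold Rv, Lv. destruct (Req_EM_T (f p) 0). ring. exfalso; apply n, Hz; left; auto.
Qed.

Theorem proposition3 (f F : R -> R) (a b : R) :
  is_C2 f -> nondegenerate f -> is_C1 F ->
  is_lim F m_infty (Finite (-1)) -> is_lim F p_infty (Finite 1) ->
  a < b -> f a * f b <> 0 ->
  exists (z : list R) (v : R),
    Sorted Rlt z /\
    (forall x, In x z <-> (a <= x <= b /\ f x = 0)) /\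
    is_pw_int (integrand F f) (a :: z ++ b :: nil) v /\
    INR (length z) = / 2 * (F (logder f b) - F (logder f a) - v) /\
    (Derive f a = 0 -> Derive f b = 0 -> INR (length z) = - / 2 * v).
Proof.
  intros H Hnd HF Hm Hp Hab Hfab.
  assert (Ha : f a <> 0) by (intro E; apply Hfab; rewrite E; ring).
  assert (Hb : f b <> 0) by (intro E; apply Hfab; rewrite E; ring).
  destruct (zeros_list f a b H Hnd Ha ltac:(lra)) as [z [Hzs Hzc]].
  assert (Hin : forall x, In x z -> a < x < b /\ f x = 0).
  { intros x Hx. apply Hzc in Hx as [[H1 H2] H3]. split; auto. split.
    destruct (Req_dec x a); [subst; tauto | lra]. destruct (Req_dec x b); [subst; tauto | lra]. }
  assert (Hs : Sorted Rlt (a :: z ++ b :: nil)).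
  { apply sorted_cons_lt. apply sorted_snoc; auto. intros x Hx; apply Hin in Hx; lra.
    intros x Hx. apply in_app_iff in Hx as [Hx|[Hx|[]]]. apply Hin in Hx; lra. lra. }
  assert (Hss : StronglySorted Rlt (a :: z ++ b :: nil)).
  { apply Sorted_StronglySorted; auto. intros x y w; apply Rlt_trans. }
  assert (Hch := chain_ok F f b H HF Hnd Hm Hp z a Hss
     ltac:(intros x Hx E; apply Hzc; split; auto; lra)).
  assert (Hpw := pw_gen _ _ _ z a b Hch).
  rewrite (sum_zeros F f z) in Hpw by (intros; apply Hin; auto).
  unfold Lv, Rv in Hpw.
  destruct (Req_EM_T (f b) 0) as [E|_]; [tauto|].
  destruct (Req_EM_T (f a) 0) as [E|_]; [tauto|].
  eexists z, _. split; auto. split; auto. split. exact Hpw. split.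
  - field.
  - intros Da Db. unfold logder. rewrite Da, Db. unfold Rdiv. rewrite !Rmult_0_l. field.
Qed.
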